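(* Let $q=2^m\geq 4$ and let $l$ be an integer with $q-4\leq l\leq q-1$. Then there exists a linear $l$-intersection pair of two MDS codes over $\mathbb{F}_q$ both with parameters $[q+2,q-1,4]_q$.
   Context: An $[n,k,d]_q$ linear code is a $k$-dimensional subspace of $\mathbb{F}_q^n$ with minimum Hamming distance $d$; it is MDS if $d=n-k+1$. Two linear codes $C_1,C_2\subseteq\mathbb{F}_q^n$ form a linear $l$-intersection pair if $\dim(C_1\cap C_2)=l$. *)

(* Defs.v *)
From HB Require Import structures.
From mathcomp Require Import all_boot all_order all_algebra all_field.
Set Implicit Arguments. Unset Strict Implicit. Unset Printing Implicit Defensive.
Import GRing.Theory.
Local Open Scope ring_scope.

Definition hwt (F : fieldType) (n : nat) (v : 'rV[F]_n) : nat :=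
  #|[set i : 'I_n | v 0 i != 0]|.

Definition hdist (F : fieldType) (n : nat) (u v : 'rV[F]_n) : nat :=
  #|[set i : 'I_n | u 0 i != v 0 i]|.

Definition min_dist (F : fieldType) (n : nat) (C : {vspace 'rV[F]_n}) (d : nat) : Prop :=
  (exists u v, [/\ u \in C, v \in C, u != v & hdist u v = d]) /\
  (forall u v, u \in C -> v \in C -> u != v -> (d <= hdist u v)%N).

Definition is_code {F : fieldType} (n k d : nat) (C : {vspace 'rV[F]_n}) : Prop :=
  \dim C = k /\ min_dist C d.

Definition is_MDS (F : fieldType) (n : nat) (C : {vspace 'rV[F]_n}) : Prop :=
  exists d, min_dist C d /\ d = (n - \dim C + 1)%N.

Definition l_intersection_pair {F : fieldType} {n : nat} (l : nat) (C1 C2 : {vspace 'rV[F]_n}) : Prop :=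
  \dim (C1 :&: C2)%VS = l.

Arguments is_code {F} n k d C.
Arguments l_intersection_pair {F n} l C1 C2.
Arguments is_MDS {F n} C.

(* Main.v *)
Require Import Defs.
From HB Require Import structures.
From mathcomp Require Import all_boot all_order all_algebra all_field.
From mathcomp Require Import ring zify.
Set Implicit Arguments. Unset Strict Implicit. Unset Printing Implicit Defensive.
Import GRing.Theory.

Section Hyperoval.
Variable F : finFieldType.
Variable q : nat.
Hypothesis hF : #|F| = q.
Hypothesis hq : (4 <= q)%N.
Local Open Scope ring_scope.
Hypothesis two0 : (2%:R : F) = 0.
Local Notation n := q.+2.

Definition a (i : nat) : F := nth 0 (enum F) i.
Definition h (k i : nat) : F :=
  if (i < q)%N then a i ^+ k else if i == q then (k == 1)%:R else (k == 2)%:R.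

Lemma a_inj i j : (i < q)%N -> (j < q)%N -> (a i == a j) = (i == j).
Proof. by move=> hi hj; rewrite /a nth_uniq ?enum_uniq // -cardT hF. Qed.

Lemma hC k i : (i < q)%N -> h k i = a i ^+ k.
Proof. by rewrite /h => ->. Qed.
Lemma hN k : h k q = (k == 1)%:R.
Proof. by rewrite /h ltnn eqxx. Qed.
Lemma hZ k : h k q.+1 = (k == 2)%:R.
Proof. by rewrite /h ltnNge leqnSn /= (gtn_eqF (ltnSn q)). Qed.

Definition D (i j l : nat) : F :=
  h 0 i * (h 1 j * h 2 l - h 2 j * h 1 l) - h 1 i * (h 0 j * h 2 l - h 2 j * h 0 l)
  + h 2 i * (h 0 j * h 1 l - h 1 j * h 0 l).

Lemma D_swap12 i j l : D j i l = - D i j l. Proof. rewrite /D; ring. Qed.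
Lemma D_swap23 i j l : D i l j = - D i j l. Proof. rewrite /D; ring. Qed.
Lemma D_rep1 i l : D i i l = 0. Proof. rewrite /D; ring. Qed.
Lemma D_rep2 i l : D l i l = 0. Proof. rewrite /D; ring. Qed.

Lemma D_sorted i j l : (i < j)%N -> (j < l)%N -> (l < n)%N -> D i j l != 0.
Proof.
move=> ij jl ln.
have iq : (i < q)%N by lia.
case: (ltnP l q) => lq.
  have jq : (j < q)%N by lia.
  have -> : D i j l = (a j - a i) * (a l - a i) * (a l - a j).
    rewrite /D !hC //= ?expr0 ?expr1; ring.
  by apply/mulf_neq0; [apply/mulf_neq0|]; rewrite subr_eq0 a_inj //; lia.
have [El|El] : l = q \/ l = q.+1 by lia.
all: subst l.
  have jq : (j < q)%N by lia.
  have -> : D i j q = (a i - a j) ^+ 2 + 2%:R * (a i * a j - a j ^+ 2).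
    rewrite /D !hN !hC // /= ?expr0 ?expr1; ring.
  by rewrite two0 mul0r addr0 expf_neq0 // subr_eq0 a_inj //; lia.
case: (ltnP j q) => jq.
  have -> : D i j q.+1 = a j - a i.
    rewrite /D !hZ !hC // /= ?expr0 ?expr1; ring.
  by rewrite subr_eq0 a_inj //; lia.
have Ej : j = q by lia.
subst j.
have -> : D i q q.+1 = 1.
  rewrite /D !hZ !hN !hC // /= ?expr0 ?expr1; ring.
exact: oner_neq0.
Qed.

Lemma D_neq0 i j l : i != j -> i != l -> j != l ->
  (i < n)%N -> (j < n)%N -> (l < n)%N -> D i j l != 0.
Proof.
move=> ij il jl hi hj hl.
have N12 x y z : D x y z != 0 -> D y x z != 0 by rewrite D_swap12 oppr_eq0.
have N23 x y z : D x y z != 0 -> D x z y != 0 by rewrite D_swap23 oppr_eq0.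
case: (ltngtP i j) ij => // hij _; case: (ltngtP j l) jl => // hjl _;
  case: (ltngtP i l) il => // hil _.
all: try first [ lia | apply: D_sorted; lia | apply: N12; apply: D_sorted; lia
  | apply: N23; apply: D_sorted; lia | apply: N12; apply: N23; apply: D_sorted; lia
  | apply: N23; apply: N12; apply: D_sorted; lia
  | apply: N12; apply: N23; apply: N12; apply: D_sorted; lia ].
apply: (N12 j i l); apply: (N23 j l i); apply: (N12 l j i); apply: D_sorted; lia.
Qed.


Lemma fresh (x y : 'I_n) : exists z : 'I_n, z != x /\ z != y.
Proof.
case: (pickP (fun z : 'I_n => (z != x) && (z != y))) => [z /andP[] *|H].
  by exists z.
have : (#|'I_n| <= #|[set x; y]|)%N.
  apply: subset_leq_card; apply/subsetP => z _; rewrite !inE.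
  by move: (H z); case: eqP; case: eqP.
rewrite card_ord cards2; lia.
Qed.

Lemma pick2 (A : {set 'I_n}) j : j \notin A -> (#|A| <= 2)%N ->
  exists i1 i2 : 'I_n, [/\ i1 != i2, i1 != j, i2 != j & A \subset [set i1; i2]].
Proof.
move=> jA hA.
have [c2|[c1|c0]] :
    (#|A| == 2)%N \/ (#|A| == 1)%N \/ (#|A| = 0)%N by lia.
- move/cards2P: c2 => [x [y [xy EA]]]; rewrite EA in jA *.
  exists x, y; split => //.
  + by apply: contraNneq jA => <-; rewrite !inE eqxx.
  + by apply: contraNneq jA => <-; rewrite !inE eqxx orbT.
- move/cards1P: c1 => [x EA]; rewrite EA in jA *.
  have [y [yx yj]] := fresh x j.
  exists x, y; split => //.
  + by rewrite eq_sym.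
  + by apply: contraNneq jA => <-; rewrite !inE eqxx.
  + by apply/subsetP => z; rewrite !inE => ->.
- rewrite (cards0_eq c0).
  have [x [xj _]] := fresh j j.
  have [y [yx yj]] := fresh x j.
  exists x, y; split => //; [by rewrite eq_sym | exact: sub0set].
Qed.

Definition hwt' (c : 'rV[F]_n) := #|[set i | c 0 i != 0]|.

Lemma D_lin i j l : D i j l = h 0 i * (h 1 j * h 2 l - h 2 j * h 1 l)
  + h 1 i * (h 2 j * h 0 l - h 0 j * h 2 l) + h 2 i * (h 0 j * h 1 l - h 1 j * h 0 l).
Proof. rewrite /D; ring. Qed.

Lemma minwt1 (c : 'rV[F]_n) :
  (forall k, (k < 3)%N -> \sum_(i < n) c 0 i * h k i = 0) ->
  (hwt c <= 3)%N -> c = 0.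
Proof.
move=> Hc hw; apply/rowP => j; rewrite mxE; apply/eqP; apply: contraT => cj.
set S := [set i | c 0 i != 0].
have jS : j \in S by rewrite inE.
have hA : (#|S :\ j| <= 2)%N.
  by move: hw; rewrite /hwt -/S (cardsD1 j S) jS.
have [i1 [i2 [h12 h1j h2j sub]]] := @pick2 (S :\ j) j (negbT (setD11 j S)) hA.
have E1 : \sum_(i < n) c 0 i * D i i1 i2 = 0.
  under eq_bigr => i _ do rewrite D_lin !mulrDr !mulrA.
  by rewrite !big_split /= -!mulr_suml !Hc // !mul0r !addr0.
have E2 : \sum_(i < n) c 0 i * D i i1 i2 = c 0 j * D j i1 i2.
  rewrite (bigD1 j) //= big1 ?addr0 // => i ij.
  have [->|ci] := eqVneq (c 0 i) 0; first by rewrite mul0r.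
  have : i \in S :\ j by rewrite !inE ij ci.
  move/(subsetP sub); rewrite !inE => /orP[]/eqP->.
    by rewrite D_rep1 mulr0.
  by rewrite D_rep2 mulr0.
have : c 0 j * D j i1 i2 != 0.
  by rewrite mulf_neq0 // D_neq0 // eq_sym.
by rewrite -E2 E1 eqxx.
Qed.


Local Notation "''E_' k" := (delta_mx (0 : 'I_1) k) (at level 8, k at level 2, format "''E_' k").

Definition G (s : nat -> F) (t : nat) : 'M[F]_(n, 3 + t) :=
  \matrix_(i, k) (if (k < 3)%N then s i * h k i else ((k : nat) == i + 2)%N%:R).
Definition Code s t : {vspace 'rV[F]_n} := lker (linfun (mulmxr (G s t))).

Lemma memCode s t c : (c \in Code s t) = (c *m G s t == 0).
Proof. by rewrite memv_ker lfunE. Qed.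

Lemma Code0E s c : (c \in Code s 0) <->
  (forall k, (k < 3)%N -> \sum_(i < n) c 0 i * (s i * h k i) = 0).
Proof.
rewrite memCode; split.
  move/eqP/rowP => E k hk.
  have := E (@Ordinal (3 + 0) k hk).
  rewrite !mxE /= => E0; apply: etrans E0; apply: eq_bigr => i _; by rewrite mxE /= hk.
move=> H; apply/eqP/rowP => k; rewrite !mxE.
have hk : (k < 3)%N by case: k.
rewrite -[RHS](H k hk); apply: eq_bigr => i _; by rewrite mxE hk.
Qed.

Lemma minwt s c : (forall i, s i != 0) -> c \in Code s 0 -> c != 0 -> (4 <= hwt c)%N.
Proof.
move=> hs /Code0E Hc cn0; rewrite leqNgt; apply/negP => hw.
pose d : 'rV[F]_n := \row_i (c 0 i * s i).
have hwd : hwt d = hwt c.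
  rewrite /hwt; apply: eq_card => i; rewrite !inE mxE mulf_eq0 (negbTE (hs i)) orbF.
  by [].
have d0 : d = 0.
  apply: minwt1; last by rewrite hwd -ltnS.
  move=> k hk; rewrite -[RHS](Hc k hk); apply: eq_bigr => i _; by rewrite mxE mulrA.
move/negP: cn0; apply; apply/eqP/rowP => i.
move/rowP: d0 => /(_ i); rewrite !mxE => /eqP.
by rewrite mulf_eq0 (negbTE (hs i)) orbF => /eqP.
Qed.

Lemma sparse_sum (g : nat -> F) :
  (forall i, (2 <= i < q)%N -> g i = 0) ->
  \sum_(i < n) g i = g 0%N + g 1%N + g q + g q.+1.
Proof.
move=> Hg.
rewrite -(big_mkord xpredT g) big_ltn // big_ltn; last by lia.
rewrite big_nat_recr /=; last by lia.
rewrite big_nat_recr /=; last by lia.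
rewrite big_nat_cond big1 ?add0r ?addrA // => i /andP[/andP[hi1 hi2] _].
by apply: Hg; lia.
Qed.

Definition f4 (i : nat) : F :=
  if i == 0%N then 1 else if i == 1%N then -1 else if i == q then a 1 - a 0
  else if i == q.+1 then a 1 ^+ 2 - a 0 ^+ 2 else 0.

Lemma f4_sum k : (k < 3)%N -> \sum_(i < n) f4 i * h k i = 0.
Proof.
move=> hk; rewrite (@sparse_sum (fun i => f4 i * h k i)); last first.
  move=> i hi; rewrite /f4.
  have -> : (i == 0%N) = false by lia.
  have -> : (i == 1%N) = false by lia.
  have -> : (i == q) = false by lia.
  have -> : (i == q.+1) = false by lia.
  by rewrite mul0r.
rewrite /f4 /=.
have -> : (q == 0%N) = false by lia.
have -> : (q == 1%N) = false by lia.
have -> : (q.+1 == 1%N) = false by lia.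
have -> : (q.+1 == q) = false by lia.
rewrite eqxx hN hZ !hC //; try lia.
case: k hk => [|[|[|k]]] //= _; rewrite ?expr0 ?expr1; rewrite ?eqxx; ring.
Qed.

Lemma attain s : (forall i, s i != 0) ->
  exists c, [/\ c \in Code s 0, c != 0 & hwt c = 4%N].
Proof.
move=> hs.
pose c : 'rV[F]_n := \row_i (f4 i / s i).
have cC : c \in Code s 0.
  apply/Code0E => k hk; rewrite -[RHS](f4_sum hk); apply: eq_bigr => i _.
  by rewrite mxE mulrA divfK.
have cn0 : c != 0.
  apply/negP => /eqP/rowP/(_ (inord 0)); rewrite !mxE inordK // /f4 eqxx.
  by move/eqP; rewrite mulf_eq0 invr_eq0 oner_eq0 (negbTE (hs _)).
exists c; split => //; apply/eqP; rewrite eqn_leq (minwt hs cC cn0) andbT.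
have sub : [set i | c 0 i != 0] \subset
    [:: (inord 0 : 'I_n); inord 1; inord q; inord q.+1].
  apply/subsetP => i; rewrite !inE mxE -!val_eqE /= !inordK //; try lia.
  apply: contraR; rewrite !negb_or => /and4P[/negbTE e0 /negbTE e1 /negbTE e2 /negbTE e3].
  by rewrite /f4 e0 e1 e2 e3 mul0r eqxx.
exact: leq_trans (subset_leq_card sub) (card_size _).
Qed.


Lemma rowG s t (o : 'I_n) (k : 'I_(3 + t)) :
  (('E_o : 'rV[F]_n) *m G s t) 0 k = if (k < 3)%N then s o * h k o else ((k : nat) == o + 2)%N%:R.
Proof. by rewrite -rowE !mxE. Qed.

Lemma eE m (k k' : 'I_m) : ('E_k : 'rV[F]_m) 0 k' = ((k' : nat) == k)%:R.
Proof. by rewrite mxE eqxx. Qed.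

Lemma dimCode s t : (forall i, s i != 0) -> (t <= 3)%N ->
  \dim (Code s t) = (n - (3 + t))%N.
Proof.
move=> hs ht.
pose f : 'Hom('rV[F]_n, 'rV[F]_(3 + t)) := linfun (mulmxr (G s t)).
have imf (x : 'rV[F]_n) : x *m G s t \in limg f.
  by rewrite -[_ *m _]/(mulmxr (G s t) x) -lfunE memv_img ?memvf.
have k'lt (k' : 'I_(3 + t)) : (k' < 6)%N by have := ltn_ord k'; lia.
have e1 (k : 'I_(3 + t)) : val k = 1%N -> 'E_k \in limg f.
  move=> hk; have -> : 'E_k = (s q)^-1 *: row (inord q) (G s t).
    apply/rowP => k'; rewrite eE !mxE inordK // hN hk.
    case: (ltnP k' 3) => hk'; first by rewrite mulKf.
    have -> : ((k' : nat) == q + 2)%N = false by have := k'lt k'; lia.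
    have -> : ((k' : nat) == 1)%N = false by lia.
    by rewrite mulr0.
  by rewrite memvZ // rowE imf.
have e2 (k : 'I_(3 + t)) : val k = 2%N -> 'E_k \in limg f.
  move=> hk; have -> : 'E_k = (s q.+1)^-1 *: row (inord q.+1) (G s t).
    apply/rowP => k'; rewrite eE !mxE inordK // hZ hk.
    case: (ltnP k' 3) => hk'; first by rewrite mulKf.
    have -> : ((k' : nat) == q.+1 + 2)%N = false by have := k'lt k'; lia.
    have -> : ((k' : nat) == 2)%N = false by lia.
    by rewrite mulr0.
  by rewrite memvZ // rowE imf.
pose k1 := @Ordinal (3 + t) 1 (ltn_addr t (isT : (1 < 3)%N)).
pose k2 := @Ordinal (3 + t) 2 (ltn_addr t (isT : (2 < 3)%N)).
have e0 (k : 'I_(3 + t)) : val k = 0%N -> 'E_k \in limg f.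
  move=> hk; have -> : 'E_k = (s 0%N)^-1 *: row (inord 0) (G s t)
      - a 0 *: 'E_k1 - a 0 ^+ 2 *: 'E_k2.
    apply/rowP => k'; rewrite eE !mxE inordK // -?val_eqE /= hk.
    case: k' => [v pv] /=; case: v pv => [|[|[|v]]] pv /=;
      rewrite ?mulKf // ?hC //; try lia; rewrite ?expr0 ?expr1; try ring.
  apply: memvB; [apply: memvB|]; apply: memvZ;
    [rewrite rowE; apply: imf | by apply: e1 | by apply: e2].
have ej (k : 'I_(3 + t)) : (3 <= k)%N -> 'E_k \in limg f.
  move=> hk; set j := (k - 2)%N.
  have hj : (1 <= j <= t)%N by have := ltn_ord k; lia.
  pose k0 := @Ordinal (3 + t) 0 (ltn_addr t (isT : (0 < 3)%N)).
  have -> : 'E_k = row (inord j) (G s t)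
      - s j *: (a j ^+ 0 *: 'E_k0 + a j *: 'E_k1 + a j ^+ 2 *: 'E_k2).
    apply/rowP => k'; rewrite eE !mxE inordK; last by lia.
    rewrite -?val_eqE /=.
    case: k' => [v pv] /=; case: v pv => [|[|[|v]]] pv /=.
    - have -> : (0 == k :> nat) = false by lia.
      rewrite hC; last by lia. rewrite mulr0n; ring.
    - have -> : (1 == k :> nat) = false by lia.
      rewrite hC; last by lia. rewrite mulr0n; ring.
    - have -> : (2 == k :> nat) = false by lia.
      rewrite hC; last by lia. rewrite mulr0n; ring.
    - have -> : (v.+3 == j + 2)%N = (v.+3 == k :> nat) by lia.
      by rewrite !mulr0 !addr0 mulr0 subr0.
  apply: memvB; first by rewrite rowE; apply: imf.
  apply: memvZ; apply: memvD; [apply: memvD|]; apply: memvZ;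
    [by apply: e0 | by apply: e1 | by apply: e2].
have full : limg f = fullv.
  apply/eqP; rewrite eqEsubv subvf /=; apply/subvP => y _.
  rewrite (row_sum_delta y); apply: memv_suml => k _; apply: memvZ.
  case: k => [v pv]; case: v pv => [|[|[|v]]] pv.
  - exact: e0. - exact: e1. - exact: e2. - exact: ej.
have := limg_ker_dim f fullv; rewrite capfv full !dimvf !dim_matrix.
rewrite /Code -/f ?mul1r ?mul1n => E; apply/eqP; rewrite -(eqn_add2r (3 + t)) subnK; [apply/eqP; exact: E| lia].
Qed.


Lemma capCode t w : w != 0 -> w != 1 -> (t <= 3)%N ->
  (Code (fun _ => 1%R) 0 :&: Code (fun i => if (1 <= i <= t)%N then w else 1%R) 0)%VS
  = Code (fun _ => 1%R) t.
Proof.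
move=> w0 w1 ht; set s := fun i : nat => if (1 <= i <= t)%N then w else 1.
apply/vspaceP => c; rewrite memv_cap; apply/idP/idP.
  move=> /andP[/Code0E H1 /Code0E Hs].
  have cT (i : 'I_n) : (1 <= i <= t)%N -> c 0 i = 0.
    move=> hi.
    pose d : 'rV[F]_n := \row_i (c 0 i * (s i - 1)).
    have : d = 0.
      apply: minwt1.
        move=> k hk.
        transitivity (\sum_(i < n) c 0 i * (s i * h k i) - \sum_(i < n) c 0 i * (1 * h k i)).
          by rewrite -sumrB; apply: eq_bigr => i' _; rewrite mxE; ring.
        by rewrite H1 // Hs // subrr.
      have sub : [set i | d 0 i != 0] \subset [:: (inord 1 : 'I_n); inord 2; inord 3].
        apply/subsetP => i'; rewrite !inE mxE -!val_eqE /= !inordK //; try lia.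
        apply: contraR; rewrite !negb_or => /and3P[e1 e2 e3].
        rewrite /s; have -> : (1 <= i' <= t)%N = false by lia.
        by rewrite subrr mulr0 eqxx.
      exact: leq_trans (subset_leq_card sub) (card_size _).
    move/rowP/(_ i); rewrite !mxE /s hi => /eqP.
    by rewrite mulf_eq0 subr_eq0 (negbTE w1) orbF => /eqP.
  rewrite memCode; apply/eqP/rowP => k; rewrite !mxE.
  case: (ltnP k 3) => hk.
    rewrite -[RHS](H1 k hk); apply: eq_bigr => i _; by rewrite mxE hk.
  rewrite big1 // => i _; rewrite mxE ltnNge hk /=.
  case: eqP => [E|_]; last by rewrite mulr0.
  by rewrite cT ?mul0r //; have := ltn_ord k; lia.
rewrite memCode => /eqP/rowP hc.
have H1 k : (k < 3)%N -> \sum_(i < n) c 0 i * (1 * h k i) = 0.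
  move=> hk; have := hc (Ordinal (ltn_addr t hk)); rewrite !mxE /= => E.
  apply: etrans E; apply: eq_bigr => i _; by rewrite mxE /= hk.
have cT (i : 'I_n) : (1 <= i <= t)%N -> c 0 i = 0.
  move=> hi; have hk : (i + 2 < 3 + t)%N by lia.
  have := hc (Ordinal hk); rewrite !mxE /= => E.
  rewrite -[RHS]E (bigD1 i) //= big1 ?addr0.
    by rewrite mxE /= ltnNge (_ : (3 <= i + 2)%N) /= ?eqxx ?mulr1 //; lia.
  move=> j ji; rewrite mxE /= ltnNge (_ : (3 <= i + 2)%N) /=; last by lia.
  have -> : (i + 2 == j + 2)%N = false.
    by rewrite eqn_add2r; apply/negbTE; rewrite eq_sym.
  by rewrite mulr0.
apply/andP; split; apply/Code0E => k hk; rewrite -[RHS](H1 k hk) //.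
apply: eq_bigr => i _; rewrite /s; case: ifP => hi; last by [].
by rewrite cT // !mul0r.
Qed.


Lemma MDS_facts s : (forall i, s i != 0) ->
  is_code n (q - 1) 4 (Code s 0) /\ is_MDS (Code s 0).
Proof.
move=> hs.
have hd : \dim (Code s 0) = (q - 1)%N by rewrite dimCode //; lia.
have md : min_dist (Code s 0) 4.
  split.
    have [c [cC cn0 hc]] := attain hs.
    exists c, 0; split => //; first exact: mem0v.
    rewrite -hc /hdist /hwt; apply: eq_card => i; by rewrite !inE mxE.
  move=> u v uC vC uv.
  have -> : hdist u v = hwt (u - v).
    rewrite /hdist /hwt; apply: eq_card => i; by rewrite !inE !mxE subr_eq0.
  apply: (minwt hs); [exact: memvB | by rewrite subr_eq0].
split; first by split.
exists 4%N; split => //; rewrite hd; lia.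
Qed.

Lemma main_q l : (q - 4 <= l)%N -> (l <= q - 1)%N ->
  exists C1 C2 : {vspace 'rV[F]_n},
    [/\ is_code n (q - 1) 4 C1, is_MDS C1, is_code n (q - 1) 4 C2, is_MDS C2
      & l_intersection_pair l C1 C2].
Proof.
move=> hl1 hl2.
have [w [w0 w1]] : exists w : F, w != 0 /\ w != 1.
  case: (pickP (fun z : F => (z != 0) && (z != 1))) => [z /andP[] *|H].
    by exists z.
  have : (#|F| <= #|[set (0%R : F); (1%R : F)]|)%N.
    apply: subset_leq_card; apply/subsetP => z _; rewrite !inE.
    by move: (H z); case: eqP; case: eqP.
  rewrite hF cards2; lia.
pose t := (q - 1 - l)%N.
have ht : (t <= 3)%N by rewrite /t; lia.
pose s := fun i : nat => if (1 <= i <= t)%N then w else 1.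
have hs : forall i, s i != 0 by move=> i; rewrite /s; case: ifP; rewrite ?oner_neq0.
have h1 : forall i : nat, (fun _ => 1 : F) i != 0 by move=> _; exact: oner_neq0.
exists (Code (fun _ => 1) 0), (Code s 0).
have [c1 m1] := MDS_facts h1; have [c2 m2] := MDS_facts hs.
split => //.
rewrite /l_intersection_pair capCode // dimCode //; rewrite /t; lia.
Qed.

End Hyperoval.

Unset Implicit Arguments.
Set Strict Implicit.

Theorem theorem5 (F : finFieldType) (m : nat) (hF : #|F| = 2 ^ m) (hq : 4 <= 2 ^ m)
  (l : nat) (hl1 : 2 ^ m - 4 <= l) (hl2 : l <= 2 ^ m - 1) :
  exists C1 C2 : {vspace 'rV[F]_(2 ^ m + 2)},
    [/\ is_code (2 ^ m + 2) (2 ^ m - 1) 4 C1, is_MDS C1,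
        is_code (2 ^ m + 2) (2 ^ m - 1) 4 C2, is_MDS C2
      & l_intersection_pair l C1 C2].
Proof.
have two0 : (2%:R : F)%R = 0%R by apply/pcharf0/(card_finPcharP hF).
rewrite addn2.
exact: (main_q hF hq two0 hl1 hl2).
Qed.
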